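(* Let $a,b,c\in\mathbf S^2$ be the corners of a spherical triangle $\Delta(abc)$ whose sides $\overline{bc}$ and $\overline{ca}$ have length less than $\pi$, and let $\alpha,\beta,\gamma$ be the midpoints of the sides $\overline{bc},\overline{ca},\overline{ab}$ respectively. Then $$\operatorname{sign}\langle\alpha,\gamma\rangle_E=\operatorname{sign}\langle\beta,\gamma\rangle_E=\operatorname{sign}\big(\langle b,\gamma\rangle_E+\langle c,\gamma\rangle_E\big)\qquad(\operatorname{sign}\in\{-1,0,1\}),$$ and if $\langle\alpha,\gamma\rangle_E=\langle\beta,\gamma\rangle_E=0$ then also $\langle\alpha,\beta\rangle_E=0$.
   Context: $\mathbf S^2\subset\mathbf R^3$ is the unit sphere with Euclidean inner product $\langle\cdot,\cdot\rangle_E$. A spherical (geodesic) triangle $\Delta(abc)$ consists of three points $a,b,c\in\mathbf S^2$ together with, for each pair of corners, a choice of one of the great-circle arcs joining them (its sides $\overline{bc},\overline{ca},\overline{ab}$), such that at most one side has length $\ge\pi$. The midpoint of a side is the point on that arc at equal arc-length distance from its two endpoints. *)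

(* Defs.v *)
From Stdlib Require Import Reals Lra.
Open Scope R_scope.

Record vec3 := V3 { vx : R; vy : R; vz : R }.

Definition dot (p q : vec3) : R := vx p * vx q + vy p * vy q + vz p * vz q.
Definition vadd (p q : vec3) : vec3 := V3 (vx p + vx q) (vy p + vy q) (vz p + vz q).
Definition vscale (k : R) (p : vec3) : vec3 := V3 (k * vx p) (k * vy p) (k * vz p).

Definition on_sphere (p : vec3) : Prop := dot p p = 1.

(* A great-circle arc, given by its starting point, a unit tangent direction
   orthogonal to the starting point, and its (arc-)length; it is the curve
   t |-> cos t * start + sin t * dir, t in [0, len]. *)
Record arc := Arc { arc_start : vec3; arc_dir : vec3; arc_len : R }.

Definition arc_point (g : arc) (t : R) : vec3 :=
  vadd (vscale (cos t) (arc_start g)) (vscale (sin t) (arc_dir g)).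

Definition arc_joins (g : arc) (p q : vec3) : Prop :=
  on_sphere p /\ arc_start g = p /\
  on_sphere (arc_dir g) /\ dot p (arc_dir g) = 0 /\
  0 <= arc_len g <= 2 * PI /\
  arc_point g (arc_len g) = q.

Definition arc_midpoint (g : arc) : vec3 := arc_point g (arc_len g / 2).

Definition spherical_triangle (a b c : vec3) (sbc sca sab : arc) : Prop :=
  on_sphere a /\ on_sphere b /\ on_sphere c /\
  arc_joins sbc b c /\ arc_joins sca c a /\ arc_joins sab a b /\
  (PI <= arc_len sbc -> arc_len sca < PI /\ arc_len sab < PI) /\
  (PI <= arc_len sca -> arc_len sbc < PI /\ arc_len sab < PI) /\
  (PI <= arc_len sab -> arc_len sbc < PI /\ arc_len sca < PI).

Definition sign (x : R) : Z :=
  match Rlt_dec 0 x with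
  | left _ => 1%Z
  | right _ => match Rlt_dec x 0 with left _ => (-1)%Z | right _ => 0%Z end
  end.

(* Main.v *)
Require Import Defs.
From Stdlib Require Import Reals Lra.
Open Scope R_scope.

Lemma dot_addl p q r : dot (vadd p q) r = dot p r + dot q r.
Proof. unfold dot; simpl; ring. Qed.
Lemma dot_addr p q r : dot r (vadd p q) = dot r p + dot r q.
Proof. unfold dot; simpl; ring. Qed.
Lemma dot_scalel k p r : dot (vscale k p) r = k * dot p r.
Proof. unfold dot; simpl; ring. Qed.
Lemma dot_scaler k p r : dot r (vscale k p) = k * dot r p.
Proof. unfold dot; simpl; ring. Qed.
Lemma dot_comm p q : dot p q = dot q p.
Proof. unfold dot; ring. Qed.

Lemma mid2 g : vadd (arc_start g) (arc_point g (arc_len g)) =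
  vscale (2 * cos (arc_len g / 2)) (arc_midpoint g).
Proof.
  destruct g as [p d L]; unfold arc_midpoint, arc_point, vadd, vscale; simpl.
  assert (HL : L = 2 * (L/2)) by field; revert HL; generalize (L/2); intros hh HL; rewrite HL.
  rewrite cos_2a_cos, sin_2a. f_equal; ring.
Qed.

Lemma mid_dots g p q : arc_joins g p q ->
  dot p (arc_midpoint g) = cos (arc_len g / 2) /\
  dot q (arc_midpoint g) = cos (arc_len g / 2).
Proof.
  destruct g as [p0 d L]; intros [Hp [Hs [Hd [Hpd [_ Hq]]]]]; simpl in *; subst p0.
  unfold on_sphere in *. subst q. unfold arc_midpoint, arc_point; simpl.
  rewrite !dot_addl, !dot_addr, !dot_scalel, !dot_scaler, (dot_comm d p), Hp, Hd, Hpd.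
  split; [ring|].
  assert (HL : L = 2 * (L/2)) by field; revert HL; generalize (L/2); intros hh HL; rewrite HL.
  rewrite cos_2a_cos, sin_2a. pose proof (sin2_cos2 hh). unfold Rsqr in *. replace (2*hh/2) with hh by field. match goal with |- ?X = _ => replace X with (cos hh + 2*cos hh*(sin hh*sin hh + cos hh*cos hh - 1)) by ring end; rewrite H; ring.
Qed.

Lemma third g p q c : arc_joins g p q -> on_sphere c ->
  dot c (arc_midpoint g) = - cos (arc_len g / 2) ->
  dot (vadd q c) (vadd c p) = 0.
Proof.
  destruct g as [p0 d L]; intros [Hp [Hs [Hd [Hpd [_ Hq]]]]] Hc; simpl in *; subst p0.
  unfold on_sphere in *. subst q. unfold arc_midpoint, arc_point; simpl.
  rewrite !dot_addl, !dot_addr, !dot_scalel, !dot_scaler.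
  rewrite ?(dot_comm d p), ?(dot_comm d c), ?(dot_comm p c), ?Hp, ?Hd, ?Hpd, ?Hc.
  assert (HL : L = 2 * (L/2)) by field; revert HL; generalize (L/2); intros hh HL; rewrite HL. replace (2*hh/2) with hh by field.
  rewrite cos_2a_cos, sin_2a. intro H.
  match goal with |- ?X = _ => replace X with (2*cos hh*((cos hh * dot c p + sin hh * dot c d) + cos hh)) by ring end.
  rewrite H; ring.
Qed.

Lemma sign_pos k x : 0 < k -> sign (k * x) = sign x.
Proof.
  intro Hk. unfold sign.
  destruct (Rlt_dec 0 (k*x)), (Rlt_dec 0 x); try reflexivity;
  try (exfalso; nra).
  destruct (Rlt_dec (k*x) 0), (Rlt_dec x 0); try reflexivity; exfalso; nra.
Qed.

Lemma arc_sum g p q : arc_joins g p q ->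
  vadd p q = vscale (2 * cos (arc_len g / 2)) (arc_midpoint g).
Proof.
  intros [_ [Hs [_ [_ [_ Hq]]]]]; rewrite <- Hs, <- Hq; apply mid2.
Qed.

Lemma arc_k g p q : arc_joins g p q -> arc_len g < PI -> 0 < 2 * cos (arc_len g / 2).
Proof.
  intros [_ [_ [_ [_ [[H0 _] _]]]]] H. pose proof PI_RGT_0.
  assert (0 < cos (arc_len g / 2)) by (apply cos_gt_0; lra). lra.
Qed.

Theorem mainTheorem2 (a b c : vec3) (sbc sca sab : arc) :
  spherical_triangle a b c sbc sca sab ->
  arc_len sbc < PI -> arc_len sca < PI ->
  sign (dot (arc_midpoint sbc) (arc_midpoint sab))
    = sign (dot (arc_midpoint sca) (arc_midpoint sab)) /\
  sign (dot (arc_midpoint sca) (arc_midpoint sab))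
    = sign (dot b (arc_midpoint sab) + dot c (arc_midpoint sab)) /\
  (dot (arc_midpoint sbc) (arc_midpoint sab) = 0 ->
   dot (arc_midpoint sca) (arc_midpoint sab) = 0 ->
   dot (arc_midpoint sbc) (arc_midpoint sca) = 0).
Proof.
  intros H Hbc Hca. destruct H as [Ha [Hb [Hc [Jbc [Jca [Jab _]]]]]].
  pose proof (arc_sum _ _ _ Jbc) as E1. pose proof (arc_sum _ _ _ Jca) as E2.
  pose proof (arc_k _ _ _ Jbc Hbc) as K1. pose proof (arc_k _ _ _ Jca Hca) as K2.
  destruct (mid_dots _ _ _ Jab) as [Da Db].
  set (k1 := 2 * cos (arc_len sbc / 2)) in *.
  set (k2 := 2 * cos (arc_len sca / 2)) in *.
  set (al := arc_midpoint sbc) in *. set (be := arc_midpoint sca) in *.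
  set (ga := arc_midpoint sab) in *.
  assert (F1 : dot b ga + dot c ga = k1 * dot al ga)
    by (rewrite <- dot_addl, E1, dot_scalel; reflexivity).
  assert (F2 : dot b ga + dot c ga = k2 * dot be ga)
    by (assert (Dab : dot a ga = dot b ga) by congruence; rewrite <- Dab, Rplus_comm, <- dot_addl, E2, dot_scalel; reflexivity).
  assert (G1 : sign (dot al ga) = sign (dot b ga + dot c ga))
    by (rewrite F1, sign_pos; auto).
  assert (G2 : sign (dot be ga) = sign (dot b ga + dot c ga))
    by (rewrite F2, sign_pos; auto).
  split; [congruence|split; [exact G2|]].
  intros Z1 Z2.
  assert (Hcg : dot c ga = - cos (arc_len sab / 2)).
  { rewrite Z1, Rmult_0_r in F1. lra. }
  pose proof (third _ _ _ _ Jab Hc Hcg) as T.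
  rewrite E1, E2, dot_scalel, dot_scaler in T.
  assert (k1 * k2 <> 0) by nra.
  apply (Rmult_eq_reg_l (k1 * k2)); [|assumption]. rewrite Rmult_0_r. lra.
Qed.
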